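(* Let $S_n=(E_{n-m},K_m)$ be a split graph on $n$ vertices such that each vertex $v$ of $K_m$ has degree at most $m$ in $S_n$ (i.e. the degree of $v$ is $m-1$ or $m$). Then $S_n$ is word-representable.
   Context: A graph $G=(V,E)$ is word-representable if there exists a word $w$ over the alphabet $V$ such that for all distinct $x,y\in V$, the letters $x$ and $y$ alternate in $w$ if and only if $xy\in E$ (alternation meaning that deleting all letters other than $x$ and $y$ leaves $xyxy\cdots$ or $yxyx\cdots$). The notation $S_n=(E_{n-m},K_m)$ denotes a split graph on $n$ vertices whose vertex set is partitioned into a maximal clique $K_m$ on $m$ vertices and an independent set $E_{n-m}$ on $n-m$ vertices (so each vertex of $E_{n-m}$ has degree at most $m-1$). *)

(* Defs.v *)
From mathcomp Require Import all_boot.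
Set Implicit Arguments. Unset Strict Implicit. Unset Printing Implicit Defensive.

Definition simple_graph (T : finType) (e : rel T) : Prop :=
  symmetric e /\ irreflexive e.

Definition nbhd (T : finType) (e : rel T) (v : T) : {set T} := [set u | e v u].
Definition degree (T : finType) (e : rel T) (v : T) : nat := #|nbhd e v|.

Definition is_clique (T : finType) (e : rel T) (K : {set T}) : Prop :=
  forall x y, x \in K -> y \in K -> x != y -> e x y.
Definition is_independent (T : finType) (e : rel T) (I : {set T}) : Prop :=
  forall x y, x \in I -> y \in I -> ~~ e x y.
Definition is_maximal_clique (T : finType) (e : rel T) (K : {set T}) : Prop :=
  is_clique e K /\ forall v, v \notin K -> ~ (forall x, x \in K -> e v x).

(* S_n = (E_{n-m}, K_m): vertex set partitioned into a maximal clique K and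
   the independent set E = complement of K. *)
Definition split_partition (T : finType) (e : rel T) (K : {set T}) : Prop :=
  is_maximal_clique e K /\ is_independent e (~: K).

Definition restrict2 (T : eqType) (w : seq T) (x y : T) : seq T :=
  [seq z <- w | (z == x) || (z == y)].

(* x and y alternate in w: the restriction to {x,y} has no two equal
   consecutive letters, i.e. it is xyxy... or yxyx... *)
Definition alternate (T : eqType) (w : seq T) (x y : T) : bool :=
  sorted (fun a b => a != b) (restrict2 w x y).

Definition represents (T : finType) (e : rel T) (w : seq T) : Prop :=
  (forall v : T, v \in w) /\
  (forall x y : T, x != y -> (alternate w x y <-> e x y)).

Definition word_representable (T : finType) (e : rel T) : Prop :=
  exists w : seq T, represents e w.

(* Main.v *)
Require Import Defs.
From mathcomp Require Import all_boot.
From mathcomp Require Import zify.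

Lemma filter_flat_nil (A S : eqType) (f : A -> seq S) (p : pred S) (s : seq A) :
  (forall v, v \in s -> filter p (f v) = [::]) -> filter p (flatten (map f s)) = [::].
Proof.
elim: s => [|a s IH] H //=.
rewrite filter_cat H ?mem_head // IH // => v vs; apply: H; by rewrite inE vs orbT.
Qed.

Lemma filter_flat_one (A S : eqType) (f : A -> seq S) (p : pred S) (s : seq A) a :
  uniq s -> a \in s -> (forall v, v \in s -> v != a -> filter p (f v) = [::]) ->
  filter p (flatten (map f s)) = filter p (f a).
Proof.
move=> us ain H; case/splitPr: ain us H => s1 s2 us H.
move: us; rewrite cat_uniq /= => /and3P [_ /norP [nas1' _] /andP [nas2 _]].
rewrite map_cat flatten_cat filter_cat /= filter_cat.
rewrite !filter_flat_nil ?cats0 //.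
- move=> v vs; apply: H; first by rewrite mem_cat inE vs !orbT.
  by apply: contraNneq nas2 => <-.
- move=> v vs; apply: H; first by rewrite mem_cat vs.
  by apply: contraNneq nas1' => <-.
Qed.

Lemma count_flat_one (A S : eqType) (f : A -> seq S) (p : pred S) (s : seq A) a :
  uniq s -> a \in s -> (forall v, v \in s -> v != a -> filter p (f v) = [::]) ->
  count p (flatten (map f s)) = count p (f a).
Proof. by move=> *; rewrite -!size_filter (@filter_flat_one _ _ _ _ _ a). Qed.

Lemma not_sorted_uu (S : eqType) (s1 s2 : seq S) u :
  ~~ sorted (fun a b => a != b) (s1 ++ u :: u :: s2).
Proof.
case: s1 => [|a s1] /=; first by rewrite eqxx.
by rewrite cat_path /= eqxx /= !andbF.
Qed.

Lemma filter_count1 (S : eqType) (s : seq S) x :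
  count_mem x s = 1 -> filter (pred1 x) s = [:: x].
Proof.
move=> c; have /all_pred1P -> : all (pred1 x) (filter (pred1 x) s) by apply/allP => z; rewrite mem_filter => /andP[].
by rewrite size_filter c.
Qed.

Lemma two_elems (S : eqType) (s : seq S) x y :
  x != y -> all (fun z => (z == x) || (z == y)) s -> count_mem x s = 1 -> count_mem y s = 1 ->
  s = [:: x; y] \/ s = [:: y; x].
Proof.
move=> nxy al cx cy.
have sz : size s = 2.
  have h0 : count (predI (pred1 x) (pred1 y)) s = 0.
    apply/eqP; rewrite -leqn0 leqNgt -has_count; apply/hasP => -[z _ /andP [/eqP -> /eqP e]].
    by rewrite e eqxx in nxy.
  have h1 := count_predUI (pred1 x) (pred1 y) s.
  rewrite h0 addn0 cx cy in h1.
  rewrite -(count_predT s) -[2]/(1+1) -h1; apply: eq_in_count => z /(allP al) /= ->; done.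
case: s sz al cx cy => [|a [|b [|c s]]] // _ /=.
rewrite !andbT => /andP [ha hb].
case/orP: ha => /eqP ->; case/orP: hb => /eqP -> //=; rewrite ?eqxx ?(negbTE nxy) ?(eq_sym y x) ?(negbTE nxy) //; by [left|right].
Qed.

Definition blk {T : finType} (e : rel T) (K : {set T}) (v : T) : seq T :=
  if v \in K then (if [exists u, (u \notin K) && e u v] then [::] else [:: v])
  else v :: [seq z <- enum T | (z \in K) && e v z] ++ [:: v].
Definition W1 {T : finType} (e : rel T) (K : {set T}) := flatten [seq blk e K v | v <- enum T].
Definition wrd {T : finType} (e : rel T) (K : {set T}) :=
  W1 e K ++ [seq z <- W1 e K | z \in K].

Lemma uniqN {T : finType} (e : rel T) (K : {set T}) :
  simple_graph e -> split_partition e K -> (forall v, v \in K -> degree e v <= #|K|) ->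
  forall x u v, x \in K -> u \notin K -> v \notin K -> e u x -> e v x -> u = v.
Proof.
move=> [sym irr] [[cl _] ind] deg x u v xK uK vK eux evx.
apply/eqP; apply: contraT => nuv.
have sub : (K :\ x) :|: [set u; v] \subset nbhd e x.
  apply/subsetP => z; rewrite !inE => /orP [/andP [zx zK] | /orP [/eqP -> | /eqP ->]].
  - by apply: cl => //; rewrite eq_sym.
  - by rewrite sym.
  - by rewrite sym.
have I0 : #|(K :\ x) :&: [set u; v]| = 0.
  apply/eqP; rewrite cards_eq0; apply/eqP/setP => z; rewrite !inE.
  apply/negbTE; apply/negP => /andP [/andP [_ zK] /orP [/eqP zu | /eqP zv]].
  - by rewrite -zu zK in uK.
  - by rewrite -zv zK in vK.
have h1 := subset_leq_card sub.
have h2 := deg x xK. rewrite /degree in h2.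
have h3 := cardsU (K :\ x) [set u; v].
have h4 := cardsD1 x K. rewrite xK in h4.
have h5 := cards2 u v. rewrite nuv in h5.
lia.
Qed.

Lemma filt_blk_in {T : finType} (e : rel T) (K : {set T}) v (p : pred T) :
  v \in K -> ~~ p v -> filter p (blk e K v) = [::].
Proof. by move=> vK pv; rewrite /blk vK; case: ifP => //= _; rewrite (negbTE pv). Qed.

Lemma filt_blk_out {T : finType} (e : rel T) (K : {set T}) v (p : pred T) :
  v \notin K -> ~~ p v -> (forall z, z \in K -> e v z -> ~~ p z) -> filter p (blk e K v) = [::].
Proof.
move=> vK pv H; rewrite /blk (negbTE vK) /= (negbTE pv) filter_cat /= (negbTE pv) cats0.
rewrite -filter_predI (eq_filter (a2 := pred0)) ?filter_pred0 // => z /=.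
by apply/negbTE; apply/negP => /and3P [pz zK evz]; move: (H z zK evz); rewrite pz.
Qed.

Lemma count_W1 {T : finType} (e : rel T) (K : {set T}) :
  simple_graph e -> split_partition e K -> (forall v, v \in K -> degree e v <= #|K|) ->
  forall x, x \in K -> count_mem x (W1 e K) = 1.
Proof.
move=> sg sp deg x xK.
case: (boolP [exists u, (u \notin K) && e u x]) => [/existsP [u /andP [uK eux]] | nex].
- have ux : u != x by apply: contraNneq uK => ->.
  rewrite /W1 (@count_flat_one _ _ _ _ _ u) ?enum_uniq ?mem_enum //.
    rewrite /blk (negbTE uK) /= count_cat /= (negbTE ux).
    have hx : x \in [seq z <- enum T | (z \in K) && e u z] by rewrite mem_filter mem_enum xK eux.
    have hu : uniq [seq z <- enum T | (z \in K) && e u z] by rewrite filter_uniq // enum_uniq.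
    by rewrite (count_uniq_mem _ hu) hx.
  move=> v _ vu; case: (boolP (v \in K)) => vK.
    rewrite /blk vK; case: ifP => ex //=.
    have -> // : (v == x) = false.
    apply/negbTE; apply: contraFneq ex => ->; apply/existsP; exists u; by rewrite uK eux.
  apply: filt_blk_out => //=; first by apply: contraNneq vK => ->.
  move=> z zK evz; apply/eqP => zx; subst z.
  by rewrite (uniqN e K sg sp deg x v u xK vK uK evz eux) eqxx in vu.
- rewrite /W1 (@count_flat_one _ _ _ _ _ x) ?enum_uniq ?mem_enum //.
    by rewrite /blk xK (negbTE nex) /= eqxx.
  move=> v _ vx; case: (boolP (v \in K)) => vK.
    by apply: filt_blk_in => //=.
  apply: filt_blk_out => //=.
  move=> z zK evz; apply/eqP => zx; subst z.
  move/existsP: nex; apply; exists v; by rewrite vK evz.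
Qed.

Lemma mem_wrd {T : finType} (e : rel T) (K : {set T}) :
  simple_graph e -> split_partition e K -> (forall v, v \in K -> degree e v <= #|K|) ->
  forall v, v \in wrd e K.
Proof.
move=> sg sp deg v; rewrite mem_cat; apply/orP; left.
case: (boolP (v \in K)) => vK.
  by rewrite -has_pred1 has_count (count_W1 e K sg sp deg v vK).
apply/flattenP; exists (blk e K v); first by apply: map_f; rewrite mem_enum.
by rewrite /blk (negbTE vK) mem_head.
Qed.

Lemma alt_sym (T : eqType) (w : seq T) x y : alternate w x y = alternate w y x.
Proof. by rewrite /alternate /restrict2; congr sorted; apply: eq_filter => z; rewrite orbC. Qed.

Lemma restr_wrd {T : finType} (e : rel T) (K : {set T}) x y :
  restrict2 (wrd e K) x y =
  restrict2 (W1 e K) x y ++ [seq z <- W1 e K | ((z == x) || (z == y)) && (z \in K)].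
Proof. by rewrite /restrict2 /wrd filter_cat -filter_predI. Qed.

Lemma caseA {T : finType} (e : rel T) (K : {set T}) :
  simple_graph e -> split_partition e K -> (forall v, v \in K -> degree e v <= #|K|) ->
  forall x y, x \in K -> y \in K -> x != y -> alternate (wrd e K) x y.
Proof.
move=> sg sp deg x y xK yK nxy.
rewrite /alternate restr_wrd.
have -> : [seq z <- W1 e K | ((z == x) || (z == y)) && (z \in K)] = restrict2 (W1 e K) x y.
  apply: eq_filter => z /=; rewrite andb_idr // => /orP [] /eqP ->; done.
have cnt : forall a, a \in K -> (a == x) || (a == y) -> count_mem a (restrict2 (W1 e K) x y) = 1.
  move=> a aK axy; rewrite /restrict2 count_filter -(count_W1 e K sg sp deg a aK).
  by apply: eq_count => z /=; apply/andb_idr => /eqP ->.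
case: (@two_elems _ (restrict2 (W1 e K) x y) x y nxy).
- by apply/allP => z; rewrite mem_filter => /andP [].
- by apply: cnt; rewrite ?eqxx.
- by apply: cnt; rewrite ?eqxx ?orbT.
- by move=> ->; rewrite /= nxy eq_sym nxy.
- by move=> ->; rewrite /= nxy eq_sym nxy.
Qed.

Lemma caseB {T : finType} (e : rel T) (K : {set T}) :
  simple_graph e -> split_partition e K -> (forall v, v \in K -> degree e v <= #|K|) ->
  forall u x, u \notin K -> x \in K -> e u x -> alternate (wrd e K) u x.
Proof.
move=> sg sp deg u x uK xK eux.
have ux : u != x by apply: contraNneq uK => ->.
have ex : [exists u, (u \notin K) && e u x] by apply/existsP; exists u; rewrite uK eux.
rewrite /alternate restr_wrd.
have -> : [seq z <- W1 e K | ((z == u) || (z == x)) && (z \in K)] = [:: x].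
  rewrite -(@filter_count1 _ _ _ (count_W1 e K sg sp deg x xK)).
  apply: eq_filter => z /=; case: eqP => [->|_] /=; first by rewrite (negbTE uK) (negbTE ux).
  by rewrite andb_idr // => /eqP ->.
have -> : restrict2 (W1 e K) u x = [:: u; x; u].
  rewrite /restrict2 /W1 (@filter_flat_one _ _ _ _ _ u) ?enum_uniq ?mem_enum //.
    rewrite /blk (negbTE uK) /= eqxx /= filter_cat /=. rewrite (_ : (u == u) = true) /=; last by apply/eqP.
    rewrite -filter_predI (@eq_filter _ _ (pred1 x)); last first.
      move=> z /=; case: (eqVneq z x) => [->|zx]; first by rewrite orbT xK eux.
      by rewrite orbF; case: eqP => // ->; rewrite (negbTE uK).
    by rewrite filter_pred1_uniq ?enum_uniq ?mem_enum.
  move=> v _ vu; case: (boolP (v \in K)) => vK.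
    case: (eqVneq v x) => [->|vx]; first by rewrite /blk xK ex.
    by apply: filt_blk_in => //=; rewrite (negbTE vu) (negbTE vx).
  apply: filt_blk_out => //=.
    by rewrite (negbTE vu); apply: contraNneq vK => ->.
  move=> z zK evz; apply/negP => /orP [/eqP zu | /eqP zx].
    by rewrite -zu zK in uK.
  subst z.
  by rewrite (uniqN e K sg sp deg x v u xK vK uK evz eux) eqxx in vu.
by rewrite /= ux eq_sym ux.
Qed.

Lemma caseC {T : finType} (e : rel T) (K : {set T}) :
  forall u y, u \notin K -> y != u -> ~~ e u y -> ~~ alternate (wrd e K) u y.
Proof.
move=> u y uK yu euy.
have hb : [seq z <- blk e K u | (z == u) || (z == y)] = [:: u; u].
  rewrite /blk (negbTE uK) /= eqxx /= filter_cat /=. rewrite (_ : (u == u) = true) /=; last by apply/eqP.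
  rewrite -filter_predI (eq_filter (a2 := pred0)) ?filter_pred0 // => z /=.
  apply/negbTE; apply/negP => /andP [/orP [/eqP -> | /eqP ->] /andP [zK ez]].
    by rewrite zK in uK.
  by rewrite ez in euy.
rewrite /alternate /restrict2 /wrd /W1.
have : u \in enum T by rewrite mem_enum.
case/splitPr => s1 s2.
rewrite map_cat flatten_cat /= !filter_cat hb -!catA /=.
exact: not_sorted_uu.
Qed.

Theorem theorem10 (T : finType) (e : rel T) (K : {set T}) :
  simple_graph e ->
  split_partition e K ->
  (forall v, v \in K -> degree e v <= #|K|) ->
  word_representable e.
Proof.
move=> sg sp deg; exists (wrd e K); split; first exact: mem_wrd.
have [sym irr] := sg; have [[cl _] ind] := sp.
move=> x y nxy.
case: (boolP (x \in K)) => xK; case: (boolP (y \in K)) => yK.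
- split=> _; [exact: cl | exact: caseA].
- rewrite alt_sym sym; case: (boolP (e y x)) => eyx.
    by split=> _ //; apply: caseB.
  split=> // h; move: (caseC e K y x yK nxy eyx); by rewrite h.
- case: (boolP (e x y)) => exy.
    by split=> _ //; apply: caseB.
  split=> // h; move: (caseC e K x y xK (ltac:(by rewrite eq_sym)) exy); by rewrite h.
- have nexy : ~~ e x y by apply: ind; rewrite inE.
  split=> h; last by rewrite h in nexy.
  move: (caseC e K x y xK (ltac:(by rewrite eq_sym)) nexy); by rewrite h.
Qed.
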